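(* Let $\mathcal{C}_0\subseteq\mathrm{GF}(q^m)^r$ be a linear code with rank weight enumerator $W^{\mathrm{R}}_{\mathcal{C}_0}(x,y)$, and for $s\ge0$ let $\mathcal{C}_s$ be its $s$-th order $\mathbf{B}$-elementary extension, with rank weight enumerator $W^{\mathrm{R}}_{\mathcal{C}_s}(x,y)$. Then $W^{\mathrm{R}}_{\mathcal{C}_s}(x,y)$ does not depend on $\mathbf{B}$ and $$W^{\mathrm{R}}_{\mathcal{C}_s}(x,y)=W^{\mathrm{R}}_{\mathcal{C}_0}(x,y)*\big[x+(q^m-1)y\big]^{[s]}.$$
   Context: $q$ is a prime power. For $\mathbf{x}\in\mathrm{GF}(q^m)^N$, $\mathrm{rk}(\mathbf{x})$ is the dimension over $\mathrm{GF}(q)$ of the $\mathrm{GF}(q)$-span of its coordinates; the rank weight enumerator of $\mathcal{C}\subseteq\mathrm{GF}(q^m)^N$ is $\sum_{\mathbf{c}\in\mathcal{C}}y^{\mathrm{rk}(\mathbf{c})}x^{N-\mathrm{rk}(\mathbf{c})}$. For $s\ge1$ and an $s\times r$ matrix $\mathbf{B}$ over $\mathrm{GF}(q)$, the $s$-th order $\mathbf{B}$-elementary extension of a linear code $\mathcal{C}_0\subseteq\mathrm{GF}(q^m)^r$ is $\mathcal{C}_s=\{(c_0,\dots,c_{r+s-1})\in\mathrm{GF}(q^m)^{r+s}:(c_0,\dots,c_{r-1})-(c_r,\dots,c_{r+s-1})\mathbf{B}\in\mathcal{C}_0\}$; the $0$-th order extension is $\mathcal{C}_0$ itself. $q$-product: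 for homogeneous polynomials $a(x,y;m)=\sum_{i=0}^{d}a_i(m)y^ix^{d-i}$ and $b(x,y;m)=\sum_{j=0}^{e}b_j(m)y^jx^{e-j}$ of degrees $d,e$, with coefficients real functions of $m$ (zero outside the given ranges), $a*b=\sum_{u=0}^{d+e}c_u(m)y^ux^{d+e-u}$ with $c_u(m)=\sum_{i=0}^uq^{ie}a_i(m)b_{u-i}(m-i)$. $q$-powers: $a^{[0]}=1$, $a^{[l]}=a^{[l-1]}*a$. Here $x+(q^m-1)y$ has coefficients $1$ and $q^m-1$; the coefficients of $W^{\mathrm{R}}_{\mathcal{C}_0}$ are regarded as constants in $m$. *)

(* Defs.v *)
From HB Require Import structures.
From mathcomp Require Import all_boot all_order all_algebra all_field.
Set Implicit Arguments. Unset Strict Implicit. Unset Printing Implicit Defensive.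
Import Order.TTheory GRing.Theory Num.Theory.
Local Open Scope ring_scope.

(* Setting: F = GF(q) a finite field, L a finite-dimensional field extension
   of F; K := finvect_type L is the same field GF(q^m) equipped with a finType
   structure (so that codewords can be counted). q = #|F|, m = \dim_F K. *)

Definition rk (F : finFieldType) (L : fieldExtType F) (N : nat)
    (x : 'rV[finvect_type L]_N) : nat :=
  let coords : seq (finvect_type L) := [seq x ord0 i | i <- enum 'I_N] in
  \dim (<<coords>>%VS : {vspace finvect_type L}).

Definition rkcount (F : finFieldType) (L : fieldExtType F) (N : nat)
    (C : {set 'rV[finvect_type L]_N}) (u : nat) : nat :=
  #|[set c in C | rk c == u]|.

Definition code_set (F : finFieldType) (L : fieldExtType F) (r : nat)
    (C0 : {vspace 'rV[finvect_type L]_r}) : {set 'rV[finvect_type L]_r} :=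
  [set c | c \in C0].

Definition elem_ext (F : finFieldType) (L : fieldExtType F) (r s : nat)
    (C0 : {vspace 'rV[finvect_type L]_r}) (B : 'M[F]_(s, r))
    : {set 'rV[finvect_type L]_(r + s)} :=
  [set c | (lsubmx c - rsubmx c *m map_mx (in_alg (finvect_type L)) B) \in C0].

(* Homogeneous polynomials sum_{i<=d} a_i(m) y^i x^(d-i) whose coefficients
   are functions of m (m ranging over integers, values rational):
   a pair (degree d, coefficient function). *)
Definition hpoly := (nat * (nat -> int -> rat))%type.

Definition hcoef (a : hpoly) (i : nat) (m : int) : rat :=
  if (i <= a.1)%N then a.2 i m else 0.

Definition qprod (q : nat) (a b : hpoly) : hpoly :=
  ((a.1 + b.1)%N, fun u m =>
     \sum_(i < u.+1) (q%:R ^+ (i * b.1)) * hcoef a i m * hcoef b (u - i) (m - i%:Z)).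

Definition qpow (q : nat) (a : hpoly) (l : nat) : hpoly :=
  iter l (fun p => qprod q p a) (0%N, fun i _ => if i == 0%N then 1 else 0).

Definition lin_hpoly (q : nat) : hpoly :=
  (1%N, fun i m => if i == 0%N then 1 else (q%:R : rat) ^ m - 1).

Definition rwe (F : finFieldType) (L : fieldExtType F) (N : nat)
    (C : {set 'rV[finvect_type L]_N}) : hpoly :=
  (N, fun i _ => (rkcount C i)%:R).

(* Main.v *)
Require Import Defs.
From HB Require Import structures.
From mathcomp Require Import all_boot all_order all_algebra all_field.
Import Order.TTheory GRing.Theory Num.Theory.
From mathcomp Require Import ring.
Set Implicit Arguments. Unset Strict Implicit. Unset Printing Implicit Defensive.
Local Open Scope ring_scope.

Definition Sp (F : finFieldType) (L : fieldExtType F) (N : nat)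
    (x : 'rV[finvect_type L]_N) : {vspace finvect_type L} :=
  <<[seq x ord0 i | i <- enum 'I_N]>>%VS.

Lemma rkE (F : finFieldType) (L : fieldExtType F) (N : nat)
    (x : 'rV[finvect_type L]_N) : rk x = \dim (Sp x).
Proof. by []. Qed.

Lemma memSp (F : finFieldType) (L : fieldExtType F) (N : nat)
    (x : 'rV[finvect_type L]_N) j : x ord0 j \in Sp x.
Proof. by apply: memv_span; apply: map_f; rewrite mem_enum. Qed.

Lemma Sp_sub (F : finFieldType) (L : fieldExtType F) (N : nat)
    (x : 'rV[finvect_type L]_N) (U : {vspace finvect_type L}) :
  (forall j, x ord0 j \in U) -> (Sp x <= U)%VS.
Proof. by move=> H; apply/span_subvP => v /mapP [j _ ->]. Qed.

Lemma Sp_row_mx (F : finFieldType) (L : fieldExtType F) (n1 n2 : nat)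
    (x : 'rV[finvect_type L]_n1) (y : 'rV[finvect_type L]_n2) :
  Sp (row_mx x y) = (Sp x + Sp y)%VS.
Proof.
apply/eqP; rewrite eqEsubv; apply/andP; split.
  apply: Sp_sub => j; rewrite -(splitK j); case: (split j) => k /=.
    by rewrite row_mxEl; apply: (subvP (addvSl _ _)); rewrite memSp.
  by rewrite row_mxEr; apply: (subvP (addvSr _ _)); rewrite memSp.
rewrite subv_add; apply/andP; split; apply: Sp_sub => j.
  by rewrite -(row_mxEl x y) memSp.
by rewrite -(row_mxEr x y) memSp.
Qed.

Lemma Sp_mulB (F : finFieldType) (L : fieldExtType F) (r s : nat)
    (a : 'rV[finvect_type L]_s) (B : 'M[F]_(s, r)) j :
  (a *m map_mx (in_alg (finvect_type L)) B) ord0 j \in Sp a.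
Proof.
rewrite mxE; apply: rpred_sum => k _.
by rewrite mxE /= mulr_algr rpredZ // memSp.
Qed.

Lemma Sp_shift (F : finFieldType) (L : fieldExtType F) (n s : nat)
    (y z : 'rV[finvect_type L]_n) (a : 'rV[finvect_type L]_s) :
  (forall j, z ord0 j \in Sp a) -> (Sp (y + z) + Sp a = Sp y + Sp a)%VS.
Proof.
move=> Hz; apply/eqP; rewrite eqEsubv !subv_add !addvSr !andbT.
apply/andP; split; apply: Sp_sub => j.
  by rewrite mxE memv_add ?memSp.
have -> : y ord0 j = (y + z) ord0 j + - z ord0 j by rewrite mxE addrK.
by rewrite memv_add ?memSp ?rpredN.
Qed.
Lemma dim_addline (F : finFieldType) (L : fieldExtType F)
    (W : {vspace finvect_type L}) (x : finvect_type L) :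
  \dim (W + <[x]>) = if x \in W then \dim W else (\dim W).+1.
Proof.
case: ifP => xW.
  by move: xW; rewrite memvE => /addv_idPl ->.
have x0 : x != 0 by apply: contraFN xW => /eqP ->; rewrite mem0v.
have := dimv_sum_cap W <[x]>; rewrite dim_vline x0.
suff -> : \dim (W :&: <[x]>) = 0%N by rewrite addn0 addn1.
have : (\dim (W :&: <[x]>)%VS <= \dim <[x]>%VS)%N by apply: dimvS; apply: capvSr.
rewrite dim_vline x0 /=; case Hd: (\dim (W :&: <[x]>)%VS) => [//|k].
rewrite ltnS leqn0 => /eqP k0; move: Hd; rewrite k0 => Hd.
have : ((W :&: <[x]>) == <[x]>)%VS by rewrite eqEdim capvSr dim_vline x0 Hd.
move/eqP => E; move: xW; rewrite memvE -E => /negP; case.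
exact: capvSl.
Qed.

Lemma sum_line (F : finFieldType) (L : fieldExtType F)
    (W : {vspace finvect_type L}) (u : nat) :
  \sum_(x : finvect_type L) (((\dim (W + <[x]>)) == u)%:R : rat) =
  (\dim W == u)%:R * (#|F|%:R ^+ \dim W) +
  ((\dim W).+1 == u)%:R * (#|F|%:R ^+ \dim (fullv : {vspace finvect_type L}) - #|F|%:R ^+ \dim W).
Proof.
rewrite (bigID (fun x => x \in W)) /=.
rewrite [X in X + _](eq_bigr (fun _ => (\dim W == u)%:R)); last first.
  by move=> x xW; rewrite dim_addline xW.
rewrite [X in _ + X](eq_bigr (fun _ => ((\dim W).+1 == u)%:R)); last first.
  by move=> x xW; rewrite dim_addline (negbTE xW).
rewrite [X in _ + X](eq_bigl (fun i => i \in [predC W])); last by move=> i; rewrite inE.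
rewrite !sumr_const.
have cK : #|finvect_type L| = (#|F| ^ \dim (fullv : {vspace finvect_type L}))%N.
  rewrite -card_vspace; apply: eq_card => x; rewrite [RHS]memvf; done.
have cC : #|[predC W]| =
   (#|F| ^ \dim (fullv : {vspace finvect_type L}) - #|F| ^ \dim W)%N.
  by rewrite -cK -card_vspace -(cardC W) addKn.
have h : #|W| = (#|F| ^ \dim W)%N by apply: card_vspace.
rewrite h cC.
rewrite -(mulr_natr ((\dim W == u)%:R : rat)) -(mulr_natr (((\dim W).+1 == u)%:R : rat)).
rewrite natrB; last by rewrite leq_pexp2l ?dimvS ?subvf // ltnW // finNzRing_gt1.
by rewrite !natrX.
Qed.
Definition fcnt (F : finFieldType) (L : fieldExtType F)
   (V : {vspace finvect_type L}) (s u : nat) : nat :=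
  #|[set a : 'rV[finvect_type L]_s | \dim (V + Sp a) == u]|.

Lemma card_sumr (T : finType) (P : pred T) :
  (#|[set x | P x]|%:R : rat) = \sum_x ((P x)%:R : rat).
Proof.
rewrite -sum1_card natr_sum big_mkcond; apply: eq_bigr => x _.
by rewrite inE; case: (P x).
Qed.

Lemma Sp1 (F : finFieldType) (L : fieldExtType F) (y : 'rV[finvect_type L]_1) :
  Sp y = <[y ord0 ord0]>%VS.
Proof.
apply/eqP; rewrite eqEsubv; apply/andP; split.
  by apply: Sp_sub => j; rewrite (ord1 j); apply: memv_line.
by rewrite -memvE memSp.
Qed.

Lemma fcntS (F : finFieldType) (L : fieldExtType F)
   (V : {vspace finvect_type L}) (s u : nat) :
  ((fcnt V s.+1 u)%:R : rat) =
  (#|F|%:R ^+ u) * (fcnt V s u)%:R +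
  (if u is u'.+1 then
     (#|F|%:R ^+ \dim (fullv : {vspace finvect_type L}) - #|F|%:R ^+ u') * (fcnt V s u')%:R
   else 0).
Proof.
rewrite /fcnt !card_sumr.
rewrite (reindex (fun p : 'rV[finvect_type L]_1 * 'rV[finvect_type L]_s =>
           (row_mx p.1 p.2 : 'rV[finvect_type L]_(s.+1)))) /=; last first.
  exists (fun a : 'rV[finvect_type L]_(1 + s) => (lsubmx a, rsubmx a)).
    by move=> [y a] _ /=; rewrite row_mxKl row_mxKr.
  by move=> a _ /=; rewrite hsubmxK.
rewrite (eq_bigr (fun p : 'rV[finvect_type L]_1 * 'rV[finvect_type L]_s => ((\dim ((V + Sp p.2) + <[p.1 ord0 ord0]>) == u)%:R : rat))); last first.
  by move=> p _; rewrite (Sp_row_mx p.1 p.2 : Sp (row_mx p.1 p.2 : 'rV_(s.+1)) = _) Sp1 addvA [(V + _)%VS]addvC -addvA addvC.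
rewrite -(pair_big xpredT xpredT (fun (y : 'rV[finvect_type L]_1) (a : 'rV[finvect_type L]_s) =>
   ((\dim ((V + Sp a) + <[y ord0 ord0]>) == u)%:R : rat))) /=.
rewrite exchange_big /=.
rewrite (eq_bigr (fun a : 'rV[finvect_type L]_s =>
   (\dim (V + Sp a) == u)%:R * (#|F|%:R ^+ \dim (V + Sp a)) +
  ((\dim (V + Sp a)).+1 == u)%:R * (#|F|%:R ^+ \dim (fullv : {vspace finvect_type L}) - #|F|%:R ^+ \dim (V + Sp a)))); last first.
  move=> a _; rewrite -sum_line.
  rewrite (reindex (fun x : finvect_type L => (const_mx x : 'rV[finvect_type L]_1))) /=; last first.
    exists (fun y : 'rV[finvect_type L]_1 => y ord0 ord0) => [x _|y _]; first by rewrite mxE.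
    by apply/rowP => j; rewrite (ord1 j) mxE.
  by apply: eq_bigr => x _; rewrite mxE.
rewrite big_split /= mulr_sumr; congr (_ + _).
  by apply: eq_bigr => a _; case: eqP => [->|_]; rewrite ?mul0r ?mulr0 ?mul1r ?mulr1.
case: u => [|u].
  by apply: big1 => a _; rewrite [(_ == 0%N)]/= mul0r.
rewrite card_sumr mulr_sumr; apply: eq_bigr => a _; rewrite eqSS.
by case: eqP => [->|_]; rewrite ?mul0r ?mulr0 ?mul1r ?mulr1.
Qed.

Lemma fcnt0 (F : finFieldType) (L : fieldExtType F)
   (V : {vspace finvect_type L}) (u : nat) :
  ((fcnt V 0 u)%:R : rat) = (\dim V == u)%:R.
Proof.
rewrite /fcnt card_sumr.
rewrite (eq_bigr (fun _ => ((\dim V == u)%:R : rat))); last first.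
  move=> a _; suff -> : Sp a = 0%VS by rewrite addv0.
  by apply/eqP; rewrite -subv0; apply: Sp_sub => -[].
by rewrite sumr_const card_mx muln0 expn0.
Qed.

Lemma fcnt_lt (F : finFieldType) (L : fieldExtType F)
   (V : {vspace finvect_type L}) (s u : nat) :
  (u < \dim V)%N -> fcnt V s u = 0%N.
Proof.
move=> H; apply/eqP; rewrite cards_eq0; apply/eqP/setP => a; rewrite !inE.
apply/negbTE; apply: contraTN H => /eqP <-; rewrite -leqNgt.
by apply: dimvS; apply: addvSl.
Qed.

Definition gq (q : nat) (s j : nat) (n : int) : rat :=
  hcoef (qpow q (lin_hpoly q) s) j n.

Lemma qpow_deg (q s : nat) : (qpow q (lin_hpoly q) s).1 = s.
Proof. by elim: s => // s IH; rewrite /qpow iterS /= -/(qpow _ _ _) IH addn1. Qed.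

Lemma gq_big (q s j : nat) n : (s < j)%N -> gq q s j n = 0.
Proof. by move=> H; rewrite /gq /hcoef qpow_deg leqNgt H. Qed.

Lemma gq0 (q j : nat) n : gq q 0 j n = (j == 0%N)%:R.
Proof. by rewrite /gq /hcoef /=; case: j. Qed.

Lemma gqS (q s j : nat) n :
  gq q s.+1 j n = (q%:R ^+ j) * gq q s j n +
    (if j is j'.+1 then q%:R ^+ j' * gq q s j' n * ((q%:R : rat) ^ (n - j'%:Z) - 1) else 0).
Proof.
rewrite {1}/gq /qpow iterS -/(qpow _ _ _) {1}/hcoef /qprod /= qpow_deg addn1.
case: (leqP j s.+1) => hj; last first.
  rewrite gq_big 1?ltnW //; case: j hj => // j hj.
  by rewrite gq_big ?mulr0 ?mul0r ?addr0.
rewrite big_ord_recr /= subnn.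
have -> : hcoef (lin_hpoly q) 0 (n - j%:Z) = 1 by [].
rewrite muln1 mulr1 -/(gq q s j n) addrC; congr (_ + _).
case: j hj => [|j] hj; first by rewrite big_ord0.
rewrite big_ord_recr /= subSnn.
have -> : hcoef (lin_hpoly q) 1 (n - j%:Z) = (q%:R : rat) ^ (n - j%:Z) - 1 by [].
rewrite muln1 -/(gq q s j n) big1 ?add0r // => i _.
have -> : hcoef (lin_hpoly q) (j.+1 - i) (n - i%:Z) = 0; last by rewrite mulr0.
rewrite /hcoef /=.
have : (1 < j.+1 - i)%N by rewrite ltn_subRL addn1 ltnS.
by case: (j.+1 - i)%N => [|[|k]].
Qed.

Lemma fcnt_main (F : finFieldType) (L : fieldExtType F) (s : nat)
   (V : {vspace finvect_type L}) (j : nat) :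
  ((fcnt V s (\dim V + j))%:R : rat) =
  (#|F|%:R ^+ (\dim V * s)) *
  gq #|F| s j ((\dim (fullv : {vspace finvect_type L}))%:Z - (\dim V)%:Z).
Proof.
have Q0 : (#|F|%:R : rat) != 0 by rewrite pnatr_eq0 -lt0n ltnW // finNzRing_gt1.
elim: s j => [|s IH] j.
  rewrite fcnt0 gq0 muln0 expr0 mul1r.
  by rewrite -{1}[\dim V]addn0 eqn_add2l eq_sym.
rewrite fcntS gqS.
case: j => [|j].
  have IH0 := IH 0%N; rewrite addn0 in IH0.
  rewrite addn0 IH0 expr0 mul1r addr0.
  have Hlt := @fcnt_lt F L V s.
  case E: (\dim V) Hlt IH0 => [|i] Hlt IH0.
    by rewrite !mul0n !expr0 !mul1r addr0.
  rewrite Hlt ?E // mulr0 addr0 mulnS exprD mulrA.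
  done.
have IH1 := IH j.+1; rewrite addnS in IH1.
rewrite addnS IH1 IH.
set i := \dim V.
set E := (#|F|%:R : rat) ^ ((\dim (fullv : {vspace finvect_type L}))%:Z - i%:Z - j%:Z).
have HE : (#|F|%:R : rat) ^+ (\dim (fullv : {vspace finvect_type L})) = #|F|%:R ^+ i * #|F|%:R ^+ j * E.
  rewrite /E !exprnP -!expfzDr //; congr (_ ^ _).
  ring.
rewrite HE !exprS exprD mulnS exprD.
ring.
Qed.

Lemma count_ext (F : finFieldType) (L : fieldExtType F) (r s : nat)
    (C0 : {vspace 'rV[finvect_type L]_r}) (B : 'M[F]_(s, r)) (u : nat) :
  rkcount (elem_ext C0 B) u = (\sum_(c : 'rV[finvect_type L]_r | c \in C0) fcnt (Sp c) s u)%N.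
Proof.
set B' := map_mx (in_alg (finvect_type L)) B.
rewrite /rkcount -sum1_card.
rewrite (eq_bigl (fun c => (c \in elem_ext C0 B) && (rk c == u))); last by move=> c; rewrite !inE.
rewrite (reindex (fun p : 'rV[finvect_type L]_r * 'rV[finvect_type L]_s =>
           row_mx (p.1 + p.2 *m B') p.2)) /=; last first.
  exists (fun c : 'rV[finvect_type L]_(r + s) => (lsubmx c - rsubmx c *m B', rsubmx c)).
    by move=> [c a] _ /=; rewrite row_mxKl row_mxKr addrK.
  by move=> c _ /=; rewrite subrK hsubmxK.
rewrite (eq_bigl (fun p : 'rV[finvect_type L]_r * 'rV[finvect_type L]_s =>
    (p.1 \in C0) && (\dim (Sp p.1 + Sp p.2) == u))); last first.
  move=> [c a] /=; rewrite /elem_ext inE row_mxKl row_mxKr addrK rkE Sp_row_mx.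
  by rewrite Sp_shift // => j; apply: Sp_mulB.
rewrite -(pair_big_dep (fun c => c \in C0) (fun c a => \dim (Sp c + Sp a) == u) (fun _ _ => 1%N)) /=.
apply: eq_bigr => c _; rewrite sum1_card /fcnt; apply: eq_card => a; rewrite !inE.
done.
Qed.

Lemma group_sum (T : finType) (P : pred T) (k : T -> nat) (H : nat -> rat) (n : nat) :
  (forall x, P x -> (n <= k x)%N -> H (k x) = 0) ->
  \sum_(x | P x) H (k x) = \sum_(i < n) (#|[set x | P x & k x == i]|%:R * H i).
Proof.
move=> HP.
have inner : forall x, P x -> H (k x) = \sum_(i < n) ((k x == i)%:R * H i).
  move=> x Px; case: (ltnP (k x) n) => Hk.
    rewrite (bigD1 (Ordinal Hk)) //= eqxx mul1r big1 ?addr0 // => i Hi.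
    suff -> : (k x == i) = false by rewrite mul0r.
    apply/negbTE; apply: contra Hi => /eqP e.
    by apply/eqP/val_inj => /=; rewrite e.
  rewrite HP // big1 // => i _.
  by rewrite gtn_eqF ?mul0r // (leq_trans (ltn_ord i) Hk).
rewrite (eq_bigr _ inner) exchange_big /=; apply: eq_bigr => i _.
rewrite -mulr_suml card_sumr; congr (_ * _).
rewrite big_mkcond; apply: eq_bigr => x _.
by case: (P x).
Qed.

Lemma rk_le (F : finFieldType) (L : fieldExtType F) (N : nat)
    (x : 'rV[finvect_type L]_N) : (rk x <= N)%N.
Proof. by rewrite rkE; apply: leq_trans (dim_span _) _; rewrite size_map size_enum_ord. Qed.

Lemma main2 (F : finFieldType) (L : fieldExtType F) (r s : nat)
    (C0 : {vspace 'rV[finvect_type L]_r}) (B : 'M[F]_(s, r)) (u : nat) :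
     (rkcount (elem_ext C0 B) u)%:R =
     hcoef (qprod #|F| (rwe (code_set C0)) (qpow #|F| (lin_hpoly #|F|) s))
           u (\dim (fullv : {vspace finvect_type L}))%:Z.
Proof.
rewrite /hcoef /qprod /= qpow_deg -/(hcoef _ _ _).
case: (leqP u (r + s)) => hu; last first.
  apply/eqP; rewrite pnatr_eq0 cards_eq0; apply/eqP/setP => c; rewrite !inE.
  apply/negbTE/andP => -[_ /eqP E].
  by move: (rk_le c); rewrite E leqNgt hu.
rewrite count_ext natr_sum.
pose H := fun i : nat => if (i <= u)%N then (#|F|%:R : rat) ^+ (i * s) *
   gq #|F| s (u - i) ((\dim (fullv : {vspace finvect_type L}))%:Z - i%:Z) else 0.
rewrite (eq_bigr (fun c => H (rk c))); last first.
  move=> c _; rewrite /H; case: leqP => hc.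
    by rewrite -{1}(subnKC hc) rkE fcnt_main.
  by rewrite fcnt_lt.
rewrite (@group_sum _ (fun c => c \in C0) (@rk F L r) H u.+1); last first.
  by move=> x _ hx; rewrite /H leqNgt hx.
apply: eq_bigr => i _.
rewrite /H -ltnS ltn_ord /hcoef /rwe /=.
rewrite [X in _ = _ * _ * X](_ : _ = gq #|F| s (u - i)
   ((\dim (fullv : {vspace finvect_type L}))%:Z - i%:Z)) //.
case: leqP => hi.
  have -> : rkcount (code_set C0) i = #|[set x in C0 | rk x == i]|.
    by rewrite /rkcount /code_set; apply: eq_card => x; rewrite !inE.
  by rewrite mulrA [X in X * _ = _]mulrC.
rewrite mulr0 mul0r.
have -> : #|[set x in C0 | rk x == i]| = 0%N.
  apply/eqP; rewrite cards_eq0; apply/eqP/setP => c; rewrite !inE.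
  apply/negbTE/andP => -[_ /eqP E].
  by move: (rk_le c); rewrite E leqNgt hi.
by rewrite mul0r.
Qed.

Theorem lemma8 (F : finFieldType) (L : fieldExtType F) (r s : nat)
    (C0 : {vspace 'rV[finvect_type L]_r}) :
  (forall B B' : 'M[F]_(s, r), forall u : nat,
     rkcount (elem_ext C0 B) u = rkcount (elem_ext C0 B') u) /\
  (forall B : 'M[F]_(s, r), forall u : nat,
     (rkcount (elem_ext C0 B) u)%:R =
     hcoef (qprod #|F| (rwe (code_set C0)) (qpow #|F| (lin_hpoly #|F|) s))
           u (\dim (fullv : {vspace finvect_type L}))%:Z).
Proof.
split; last exact: main2.
move=> B B' u; apply/eqP; rewrite -(eqr_nat rat) !main2 //.
Qed.
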